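(* Let $\mathbb{E}$ be a field with $p=\mathrm{char}(\mathbb{E})$, let $m>1$ with $\gcd(m,p)=1$ if $p>0$, and let $s_0,\ldots,s_{m-1}$ be an enumeration of a subgroup $M$ of $\mathbb{E}^*$ of size $m$ such that $\phi_{p,m}(x)$ divides $\tilde{s}(x)=s_0x^{m-1}+s_1x^{m-2}+\cdots+s_{m-1}$. Let $f(x)=(x^m-1)/\gcd(x^m-1,\tilde{s}(x))$. Then the sequence obtained by extending $s_0,\ldots,s_{m-1}$ periodically with period $m$ is an $f$-sequence presenting $M$, and $f$ divides $(x^m-1)/\big((x-1)\phi_{p,m}(x)\big)$; that is, $M$ is an automatically non-standard $f$-subgroup.
   Context: $\phi_{p,m}(x)$ is the $m$th cyclotomic polynomial $\phi_m(x)\in\mathbb{Z}[x]$ (defined by $x^m-1=\prod_{d\mid m}\phi_d(x)$), reduced modulo $p$ if $p>0$; when $\gcd(m,p)=1$ its zeros are exactly the primitive $m$th roots of unity. An $f$-sequence is a two-way infinite sequence with $f(\sigma)s=0$, $(\sigma s)_n=s_{n+1}$. A sequence $s$ presents a finite subgroup $M$ if $s$ has smallest period $|M|$ and $M=\{s_0,\ldots,s_{|M|-1}\}$. Definition: for a field $\mathbb{F}$ of characteristic $p$ and $m>1$ with $\gcd(m,p)=1$ if $p>0$, if $f\in\mathbb{F}[x]$ divides $(x^m-1)/((x-1)\phi_{p,m}(x))$ and an $f$-sequence $s$ (over an extension of $\mathbb{F}$) of period $m$ has $M=\{s_0,\ldots,s_{m-1}\}$ a subgroup of size $m$, then $M$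 is called an automatically non-standard $f$-subgroup. *)

(* Defs.v *)
From HB Require Import structures.
From mathcomp Require Import all_boot all_order all_algebra all_field.
Set Implicit Arguments. Unset Strict Implicit. Unset Printing Implicit Defensive.
Import Order.TTheory GRing.Theory Num.Theory.
Local Open Scope ring_scope.

(* phi_{p,m}: the m-th cyclotomic polynomial of Z[x] mapped into F[x]
   (i.e. reduced mod p = char F when p > 0). *)
Definition cycloF (F : fieldType) (m : nat) : {poly F} :=
  map_poly (fun z : int => z%:~R) 'Phi_m.

Definition stilde (F : fieldType) (s : seq F) : {poly F} :=
  \sum_(i < size s) s`_i *: 'X^((size s).-1 - i).

Definition is_fseq (F : fieldType) (f : {poly F}) (u : int -> F) : Prop :=
  forall n : int, \sum_(k < size f) f`_k * u (n + k%:Z)%R = 0.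

Definition has_period (F : fieldType) (u : int -> F) (d : nat) : Prop :=
  forall n : int, u (n + d%:Z)%R = u n.

Definition presents (F : fieldType) (u : int -> F) (M : seq F) : Prop :=
  [/\ (0 < size M)%N, has_period u (size M),
      (forall d : nat, (0 < d < size M)%N -> ~ has_period u d)
    & M =i [seq u (i%:Z) | i <- iota 0 (size M)]].

Definition is_mult_subgroup (F : fieldType) (M : seq F) : Prop :=
  [/\ uniq M, 0 \notin M, 1 \in M,
      {in M &, forall x y, x * y \in M} & {in M, forall x, x^-1 \in M}].

Definition periodic_ext (F : fieldType) (s : seq F) : int -> F :=
  fun n => s`_(`|(n %% (size s)%:Z)%Z|%N).

(* Automatically non-standard f-subgroup (definition of the paper, with the
   base field F = the field E itself and the sequence over E). *)
Definition auto_nonstandard (F : fieldType) (m : nat) (f : {poly F}) (M : seq F) : Prop :=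
  [/\ (1 < m)%N /\ (forall p, p \in [pchar F] -> coprime m p),
      f %| ('X^m - 1) %/ (('X - 1) * cycloF F m),
      is_mult_subgroup M, size M = m &
      (exists u : int -> F, [/\ is_fseq f u, has_period u m &
                               M =i [seq u (i%:Z) | i <- iota 0 m]])].

(* Main.v *)
Require Import Defs.
From HB Require Import structures.
From mathcomp Require Import all_boot all_order all_algebra all_field zify.
Import GRing.Theory.
Local Open Scope ring_scope.
Set Implicit Arguments. Unset Strict Implicit.

Section L.
Variable F : fieldType.
Implicit Types (a b h : {poly F}) (u v w : int -> F).

Definition Lop h u : int -> F := fun n => \sum_(k < size h) h`_k * u (n + k%:Z).

Lemma Lop_bound h u n N : (size h <= N)%N -> Lop h u n = \sum_(k < N) h`_k * u (n + k%:Z).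
Proof.
move=> hN; rewrite /Lop (big_ord_widen _ (fun k => h`_k * u (n + k%:Z)) hN) big_mkcond /=.
apply: eq_bigr => i _; case: ifP => // /negbT; rewrite -leqNgt => hi.
by rewrite nth_default // mul0r.
Qed.

Lemma Lop0 u n : Lop 0 u n = 0.
Proof. by rewrite /Lop size_poly0 big_ord0. Qed.

Lemma LopD a b u n : Lop (a + b) u n = Lop a u n + Lop b u n.
Proof.
rewrite !(@Lop_bound _ _ _ (maxn (size a) (size b))) ?leq_maxl ?leq_maxr ?size_polyD //.
by rewrite -big_split; apply: eq_bigr => i _; rewrite coefD mulrDl.
Qed.

Lemma LopZ c a u n : Lop (c *: a) u n = c * Lop a u n.
Proof.
rewrite !(@Lop_bound _ _ _ (size a)) ?size_scale_leq // mulr_sumr.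
by apply: eq_bigr => i _; rewrite coefZ mulrA.
Qed.

Lemma LopB a b u n : Lop (a - b) u n = Lop a u n - Lop b u n.
Proof. by rewrite LopD -scaleN1r LopZ mulN1r. Qed.

Lemma Lop1 u n : Lop 1 u n = u n.
Proof. by rewrite /Lop size_poly1 big_ord1 coef1 mul1r addr0. Qed.

Lemma LopMX a u n : Lop (a * 'X) u n = Lop a u (n + 1).
Proof.
rewrite (@Lop_bound _ _ _ (size a).+1); last first.
  by rewrite (leq_trans (size_polyMleq _ _)) // size_polyX addn2.
rewrite big_ord_recl coefMX eqxx mul0r add0r /Lop.
apply: eq_bigr => i _; rewrite coefMX /=; congr (_ * u _).
by rewrite /bump leq0n add1n -addn1 PoszD addrA addrAC.

Qed.

Lemma Lop_ext a u v n : (forall k, u k = v k) -> Lop a u n = Lop a v n.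
Proof. by move=> e; apply: eq_bigr => i _; rewrite e. Qed.

Lemma Lop_lin a u v c n : Lop a (fun k => u k + c * v k) n = Lop a u n + c * Lop a v n.
Proof.
rewrite /Lop mulr_sumr -big_split; apply: eq_bigr => i _.
by rewrite mulrDr mulrCA.
Qed.

Lemma Lop_shift a w n : Lop a (fun k => w (k + 1)) n = Lop a w (n + 1).
Proof. by apply: eq_bigr => i _; rewrite addrAC. Qed.

Lemma Lopzero a n : Lop a (fun _ => 0) n = 0.
Proof. by rewrite /Lop big1 // => i _; rewrite mulr0. Qed.

Lemma LopM a b u n : Lop (a * b) u n = Lop a (Lop b u) n.
Proof.
elim/poly_ind: b u n => [|b c IH] u n.
  rewrite mulr0 Lop0 -(Lopzero a n); apply: Lop_ext => k; by rewrite Lop0.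
rewrite mulrDr mulrA (mulrC a c%:P) mul_polyC LopD LopMX IH LopZ.
rewrite (@Lop_ext a (Lop (b * 'X + c%:P) u) (fun k => Lop b u (k + 1) + c * u k)).
  by rewrite Lop_lin Lop_shift.
by move=> k; rewrite LopD LopMX -[c%:P]mulr1 mul_polyC LopZ Lop1.
Qed.

Lemma LopXn j u n : Lop ('X^j) u n = u (n + j%:Z).
Proof.
elim: j n => [|j IH] n; first by rewrite expr0 Lop1 addr0.
by rewrite exprSr LopMX IH -addn1 PoszD addrAC addrA.
Qed.

Lemma Lop_sum N (G : 'I_N -> {poly F}) u n :
  Lop (\sum_(i < N) G i) u n = \sum_(i < N) Lop (G i) u n.
Proof.
elim: N G => [|N IH] G; first by rewrite !big_ord0 Lop0.
by rewrite !big_ord_recr LopD IH.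
Qed.


Lemma modz_key (m i : nat) (k : int) : (i < m)%N ->
  (((k - i%:Z) %% m)%Z == 0) = (i == `|(k %% m)%Z|%N).
Proof. move=> h.
have m0 : (m%:Z != 0) by rewrite eqz_nat -lt0n (leq_ltn_trans _ h).
have ->: (((k - i%:Z) %% m)%Z == 0) = (m %| k - i%:Z)%Z.
  by apply/idP/idP => [/eqP/dvdz_mod0P // | /dvdz_mod0P ->].
by rewrite -eqz_mod_dvd modz_nat modn_small // -(gez0_abs (modz_ge0 k m0)) eqz_nat eq_sym.
Qed.

Definition ind0 (m : nat) : int -> F := fun x => if ((x %% m%:Z)%Z == 0) then 1 else 0.

Lemma ind0_period m n : ind0 m (n + m%:Z) = ind0 m n.
Proof. by rewrite /ind0 modzDr. Qed.

Lemma Lop_stilde (s : seq F) (k : int) : (0 < size s)%N ->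
  Lop (stilde s) (ind0 (size s)) (k + 1) = periodic_ext s k.
Proof.
move=> s0; rewrite /stilde Lop_sum.
have km : (`|(k %% (size s)%:Z)%Z| < size s)%N.
  have m0 : ((size s)%:Z != 0) by rewrite eqz_nat -lt0n.
  rewrite -ltz_nat (gez0_abs (modz_ge0 k m0)) ltz_pmod //.
rewrite (eq_bigr (fun i : 'I_(size s) => if nat_of_ord i == `|(k %% (size s)%:Z)%Z|%N then s`_i else 0)).
  rewrite -big_mkcond /= (big_pred1 (Ordinal km)) //.
move=> i _; rewrite LopZ LopXn /ind0.
have -> : k + 1 + (((size s).-1 - i)%N)%:Z = (k - i%:Z) + (size s)%:Z.
  have := ltn_ord i; lia.
by rewrite modzDr modz_key //; case: ifP; rewrite ?mulr1 ?mulr0.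
Qed.

End L.

Lemma sum_subgroup0 (F : fieldType) (s : seq F) :
  (1 < size s)%N -> is_mult_subgroup s -> \sum_(x <- s) x = 0.
Proof.
move=> s1 [Us n0 one mulM invM].
have [g gs g1] : exists2 g, g \in s & g != 1.
  have i0 : (0 < size s)%N by apply: ltnW.
  have d : s`_0 != s`_1 by rewrite (nth_uniq 0 i0 s1 Us).
  case: (eqVneq s`_0 1) => h; last by exists s`_0; rewrite // mem_nth.
  by exists s`_1; rewrite ?mem_nth // -h eq_sym.
have g0 : g != 0 by apply: contraNneq n0 => <-.
have Um : uniq (map (fun x => g * x) s) by rewrite map_inj_uniq //; apply: mulfI.
have sub : {subset map (fun x => g * x) s <= s}.
  by move=> y /mapP[x xs ->]; apply: mulM.
have [_ eqi] := uniq_min_size Um sub (eq_leq (esym (size_map _ _))).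
have P := uniq_perm Um Us eqi.
have : \sum_(x <- s) x = g * \sum_(x <- s) x.
  by rewrite mulr_sumr -(perm_big _ P) /= big_map.
move/eqP; rewrite -subr_eq0 -{1}[\sum_(x <- s) x]mul1r -mulrBl mulf_eq0 subr_eq0 eq_sym (negbTE g1) /=.
by move/eqP.
Qed.

Lemma d1 : divisors 1 = [:: 1%N]. Proof. reflexivity. Qed.
Lemma Phi1 : 'Phi_1 = 'X - 1 :> {poly int}.
Proof. have := prod_Cyclotomic (ltn0Sn 0). rewrite d1 big_seq1 => ->. by rewrite expr1. Qed.
Lemma decomp (m : nat) : (1 < m)%N -> 'X^m - 1 = 'Phi_1 * ('Phi_m * \prod_(d <- rem m (rem 1%N (divisors m))) 'Phi_d) :> {poly int}.
Proof.
move=> m1; have m0 : (0 < m)%N by apply: ltnW.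
have h1 : (1 \in divisors m)%N by rewrite -dvdn_divisors // dvd1n.
have h2 : m \in rem 1%N (divisors m).
  by rewrite (mem_rem_uniq _ (divisors_uniq m)) inE -dvdn_divisors // dvdnn andbT (gtn_eqF m1).
rewrite -(prod_Cyclotomic m0) (big_rem _ h1) /= (big_rem _ h2) /=.
done.
Qed.
Lemma AP_lemma (E : fieldType) (m : nat) : (1 < m)%N ->
  ('X - 1) * cycloF E m %| 'X^m - 1.
Proof.
move=> m1.
have := congr1 (map_poly (fun z : int => z%:~R : E)) (@decomp m m1).
rewrite rmorphM /= rmorphM /= Phi1.
rewrite rmorphB /= rmorph1 map_polyXn rmorphB /= map_polyX rmorph1 => ->.
by rewrite mulrA dvdp_mulr.
Qed.

Theorem mainTheorem7 (E : fieldType) (m : nat) (s : seq E) :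
  (1 < m)%N ->
  (forall p : nat, p \in [pchar E] -> coprime m p) ->
  size s = m ->
  is_mult_subgroup s ->
  cycloF E m %| stilde s ->
  let f := ('X^m - 1) %/ gcdp ('X^m - 1) (stilde s) in
  [/\ is_fseq f (periodic_ext s), presents (periodic_ext s) s,
      f %| ('X^m - 1) %/ (('X - 1) * cycloF E m)
    & auto_nonstandard m f s].
Proof.
move=> m1 chm sz grp dvS f.
have m0 : (0 < m)%N by apply: ltnW.
set P : {poly E} := 'X^m - 1.
set S := stilde s.
set G := gcdp P S.
have GP : G %| P by apply: dvdp_gcdl.
have GS : G %| S by apply: dvdp_gcdr.
have fseq : is_fseq f (periodic_ext s).
  move=> n; rewrite -/(Lop f (periodic_ext s) n).
  have fS : f * S = (S %/ G) * P.
    by rewrite /f -/P -/G -{1}(divpK GS) mulrCA divpK.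
  rewrite (@Lop_ext _ f _ (fun k => Lop S (ind0 E (size s)) (k + 1))); last first.
    by move=> k; rewrite Lop_stilde // sz.
  rewrite Lop_shift -LopM fS LopM -(Lopzero (S %/ G) (n + 1)).
  apply: Lop_ext => k; rewrite /P LopB LopXn Lop1 sz.
  by rewrite ind0_period subrr.
have per : has_period (periodic_ext s) m.
  by move=> n; rewrite /periodic_ext sz modzDr.
have ui : forall i : nat, (i < m)%N -> periodic_ext s i%:Z = s`_i.
  by move=> i im; rewrite /periodic_ext sz modz_nat modn_small.
have memb : s =i [seq periodic_ext s i%:Z | i <- iota 0 m].
  have -> : [seq periodic_ext s i%:Z | i <- iota 0 m] = s.
    rewrite -{2}(mkseq_nth 0 s) sz /mkseq.
apply/eq_in_map => i.
    by rewrite mem_iota add0n => /ui.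
  by [].
have pres : presents (periodic_ext s) s.
  split; rewrite ?sz //.
  move=> d /andP[d0 dm] /(_ 0); rewrite add0r ui // (ui 0%N m0 : periodic_ext s 0 = s`_0).
  case: grp => Us _ _ _ _.
  by move/eqP; rewrite nth_uniq ?sz // => /eqP dd; rewrite dd in d0.
have mE : m%:R != 0 :> E.
  apply/negP => /eqP mz.
  have [p pc] := GRing.natf0_pchar m0 (introT eqP mz).
  have := chm p pc; rewrite coprime_sym prime_coprime ?(GRing.pcharf_prime pc) //.
  by rewrite (GRing.dvdn_pcharf pc) mz eqxx.
have sep : separable_poly P by apply: separable_Xn_sub_1.
set A := ('X - 1) * cycloF E m.
have AP : A %| P.
  by apply: AP_lemma.
have cop : coprimep ('X - 1) (cycloF E m) by apply: (separable_coprime sep AP).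
have X1S : ('X - 1) %| S.
  rewrite -polyC1 dvdp_XsubCl /root /S /stilde horner_sum.
  have -> : \sum_(i < size s) (s`_i *: 'X^((size s).-1 - i)).[1] = \sum_(x <- s) x.
    rewrite (big_nth 0) big_mkord; apply: eq_bigr => i _.
    by rewrite hornerZ hornerXn expr1n mulr1.
  by rewrite sum_subgroup0 ?sz.
have AG : A %| G by rewrite dvdp_gcd AP /A Gauss_dvdp // X1S.
have fdiv : f %| P %/ A.
  have -> : P %/ A = f * (G %/ A) by rewrite /f -/P -/G divp_mulA // divpK.
  exact: dvdp_mulr.
split => //.
split; [by split | exact: fdiv | exact: grp | exact: sz | ].
exists (periodic_ext s); split => //.
Qed.
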